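(* Let $0<\gamma<0.1$ and consider the dataset in $\mathbb{R}^2$: $\mathbf{x}_1=(\gamma,\sqrt{1-\gamma^2})$, $\mathbf{x}_2=(\gamma,-\sqrt{1-\gamma^2}/2)$, $y_1=y_2=1$. Let $L(\mathbf{w})=\frac12\sum_{i=1}^2\ln(1+\exp(-y_i\mathbf{x}_i^\top\mathbf{w}))$ and run gradient descent $\mathbf{w}_t=\mathbf{w}_{t-1}-\eta\nabla L(\mathbf{w}_{t-1})$ with $\mathbf{w}_0=0$ and constant stepsize $\eta>0$. If the sequence $(L(\mathbf{w}_t))_{t\ge0}$ is non-increasing, then $L(\mathbf{w}_t)\ge c_0/t$ for all $t\ge1$, where $c_0>0$ depends only on $\gamma$ (not on $t$ or $\eta$). *)

(* Defs.v *)
From Stdlib Require Import Reals Lra.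
Open Scope R_scope.

Definition vec2 := (R * R)%type.
Definition dot (u v : vec2) : R := fst u * fst v + snd u * snd v.

Definition x1 (g : R) : vec2 := (g, sqrt (1 - g ^ 2)).
Definition x2 (g : R) : vec2 := (g, - sqrt (1 - g ^ 2) / 2).
Definition y1 : R := 1.
Definition y2 : R := 1.

Definition ell (z : R) : R := ln (1 + exp (- z)).
Definition ell' (z : R) : R := - / (1 + exp z).

Definition Loss (g : R) (w : vec2) : R :=
  / 2 * (ell (y1 * dot (x1 g) w) + ell (y2 * dot (x2 g) w)).

Definition scal (a : R) (v : vec2) : vec2 := (a * fst v, a * snd v).
Definition vadd (u v : vec2) : vec2 := (fst u + fst v, snd u + snd v).
Definition gradL (g : R) (w : vec2) : vec2 :=
  scal (/ 2) (vadd (scal (ell' (y1 * dot (x1 g) w) * y1) (x1 g))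
                   (scal (ell' (y2 * dot (x2 g) w) * y2) (x2 g))).

Fixpoint gd (g eta : R) (t : nat) : vec2 :=
  match t with
  | O => (0, 0)
  | S t' => let w := gd g eta t' in vadd w (scal (- eta) (gradL g w))
  end.

(* Main.v *)
Require Import Defs.
From Stdlib Require Import Reals Lra.
Open Scope R_scope.

Lemma ln_ge_1_inv (x : R) : 0 < x -> 1 - / x <= ln x.
Proof.
  intro Hx. pose proof (exp_ineq1_le (- ln x)) as H.
  rewrite exp_Ropp, exp_ln in H by exact Hx. lra.
Qed.

Lemma ell_lb (z : R) : / (1 + exp z) <= ell z.
Proof.
  unfold ell. pose proof (exp_pos z) as Hz. pose proof (exp_pos (- z)) as Hmz.
  eapply Rle_trans; [|apply ln_ge_1_inv; lra].
  rewrite exp_Ropp.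
  apply Req_le. field. split; lra.
Qed.

Lemma ell_nonneg (z : R) : 0 <= ell z.
Proof.
  unfold ell. rewrite <- ln_1. apply Rlt_le, ln_increasing; [lra|].
  pose proof (exp_pos (- z)); lra.
Qed.

Lemma ell_neg (x : R) : x <= ell (- x).
Proof.
  unfold ell. rewrite Ropp_involutive.
  rewrite <- (ln_exp x) at 1. apply Rlt_le, ln_increasing. apply exp_pos.
  lra.
Qed.

Lemma ss (g : R) : 0 < g < 1/10 -> sqrt (1 - g^2) * sqrt (1 - g^2) = 1 - g^2.
Proof. intro. apply sqrt_sqrt. nra. Qed.

Lemma step_z1 (g eta : R) (w : vec2) : 0 < g < 1/10 -> 0 < eta ->
  dot (x1 g) (vadd w (scal (-eta) (gradL g w)))
  <= dot (x1 g) w + eta / 2 * / (1 + exp (dot (x1 g) w)).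
Proof.
  intros Hg He. pose proof (ss g Hg) as Hs.
  unfold gradL, ell', y1, y2. rewrite !Rmult_1_l.
  set (e1 := / (1 + exp (dot (x1 g) w))).
  set (e2 := / (1 + exp (dot (x2 g) w))).
  assert (He2 : 0 < e2).
  { unfold e2. apply Rinv_0_lt_compat. pose proof (exp_pos (dot (x2 g) w)). lra. }
  clearbody e1 e2.
  unfold dot, vadd, scal, x1, x2 in *; cbn [fst snd].
  set (s := sqrt (1 - g^2)) in *.
  assert (E : g * (fst w + - eta * (/ 2 * (- e1 * 1 * g + - e2 * 1 * g))) +
   s * (snd w + - eta * (/ 2 * (- e1 * 1 * s + - e2 * 1 * (- s / 2))))
   = g * fst w + s * snd w + eta / 2 * e1 * (g^2 + s * s)
     + eta / 2 * e2 * (g ^ 2 - s * s / 2)) by field.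
  rewrite E, Hs.
  assert (0 <= eta * e2 * (1 - 3 * g^2)).
  { apply Rmult_le_pos; [nra|nra]. }
  nra.
Qed.

Lemma exp_le (x y : R) : x <= y -> exp x <= exp y.
Proof. intro H. destruct (Req_dec x y) as [->|]; [lra|]. apply Rlt_le, exp_increasing; lra. Qed.

Lemma exp_le_aux (u : R) : 0 <= u -> exp u <= 1 + u * exp u.
Proof.
  intro Hu. pose proof (exp_ineq1_le (- u)) as H.
  rewrite exp_Ropp in H. pose proof (exp_pos u).
  assert (H2 : (1 - u) * exp u <= / exp u * exp u) by (apply Rmult_le_compat_r; lra).
  rewrite Rinv_l in H2 by lra. nra.
Qed.

Lemma bound_z1 (g eta E : R) : 0 < g < 1/10 -> 0 < eta -> eta <= E ->
  forall t : nat, exp (dot (x1 g) (gd g eta t)) <= 1 + (E / 2 * exp (E / 2)) * INR t.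
Proof.
  intros Hg He HE. induction t as [|t IH].
  - simpl. unfold dot; simpl. rewrite !Rmult_0_r, Rplus_0_r, exp_0. lra.
  - rewrite S_INR. simpl gd. cbv zeta.
    set (w := gd g eta t) in *.
    set (z := dot (x1 g) w) in *.
    pose proof (step_z1 g eta w Hg He) as Hst. fold z in Hst.
    set (u := eta / 2 * / (1 + exp z)) in *.
    pose proof (exp_pos z) as Hz.
    assert (Hu0 : 0 <= u).
    { unfold u. apply Rmult_le_pos; [lra|]. apply Rlt_le, Rinv_0_lt_compat; lra. }
    assert (Hu1 : u <= E / 2).
    { unfold u. assert (/ (1 + exp z) <= 1).
      { rewrite <- Rinv_1. apply Rinv_le_contravar; lra. }
      nra. }
    assert (Hzu : exp z * u <= E / 2).
    { unfold u. replace (exp z * (eta / 2 * / (1 + exp z))) with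
        (eta / 2 * (exp z / (1 + exp z))) by (field; lra).
      assert (exp z / (1 + exp z) <= 1).
      { apply Rmult_le_reg_r with (1 + exp z); [lra|].
        unfold Rdiv. rewrite Rmult_assoc, Rinv_l by lra. lra. }
      nra. }
    eapply Rle_trans. { apply exp_le. exact Hst. }
    rewrite exp_plus.
    pose proof (exp_le_aux u Hu0) as Ha.
    assert (Heu : exp u <= exp (E / 2)) by (apply exp_le; lra).
    assert (exp z * exp u <= exp z + exp z * u * exp (E / 2)).
    { assert (exp z * exp u <= exp z * (1 + u * exp u)) by (apply Rmult_le_compat_l; lra).
      assert (exp z * u * exp u <= exp z * u * exp (E/2)).
      { apply Rmult_le_compat_l; [|lra]. apply Rmult_le_pos; lra. }
      nra. }
    assert (exp z * u * exp (E / 2) <= E / 2 * exp (E / 2)).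
    { apply Rmult_le_compat_r; [apply Rlt_le, exp_pos|lra]. }
    lra.
Qed.

Lemma eta_bound (g eta : R) : 0 < g < 1/10 -> 0 < eta ->
  Loss g (gd g eta 1) <= Loss g (gd g eta 0) -> eta <= 40.
Proof.
  intros Hg He H. pose proof (ss g Hg) as Hs.
  assert (L0 : Loss g (gd g eta 0) = ln 2).
  { unfold Loss, ell, dot, y1, y2; simpl. rewrite !Rmult_0_r, !Rplus_0_r, !Rmult_1_l.
    rewrite Ropp_0, exp_0. replace (1 + 1) with 2 by ring. field. }
  assert (Hln : ln 2 < 1).
  { rewrite <- ln_exp with 1. apply ln_increasing; [lra|].
    pose proof (exp_ineq1 1). lra. }
  assert (Hz2 : y2 * dot (x2 g) (gd g eta 1) = - (eta * (1 - 9 * g^2) / 16)).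
  { assert (Hw : gd g eta 1 = (eta * g / 2, eta * sqrt (1 - g^2) / 8)).
    { cbn [gd]. unfold gradL, ell', y1, y2, dot, vadd, scal, x1, x2; cbn [fst snd].
      rewrite !Rmult_0_r, !Rplus_0_r, !Rmult_0_r, exp_0. f_equal; field. }
    rewrite Hw. unfold y2, dot, x2; cbn [fst snd].
    set (s := sqrt (1 - g^2)) in *.
    transitivity (eta/16 * (8 * g^2 - s * s)); [field|]. rewrite Hs. field. }
  rewrite L0 in H. unfold Loss in H. rewrite Hz2 in H.
  pose proof (ell_neg (eta * (1 - 9 * g ^ 2) / 16)).
  pose proof (ell_nonneg (y1 * dot (x1 g) (gd g eta 1))).
  assert (0.9 <= 1 - 9 * g^2) by nra.
  nra.
Qed.

Theorem mainTheorem3 :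
  forall gamma : R, 0 < gamma < 1 / 10 ->
  exists c0 : R, 0 < c0 /\
    forall eta : R, 0 < eta ->
      (forall t : nat, Loss gamma (gd gamma eta (S t)) <= Loss gamma (gd gamma eta t)) ->
      forall t : nat, (1 <= t)%nat -> Loss gamma (gd gamma eta t) >= c0 / INR t.
Proof.
  intros g Hg.
  set (D := 40 / 2 * exp (40 / 2)).
  assert (HD : 0 < D) by (unfold D; pose proof (exp_pos (40/2)); nra).
  exists (/ (2 * (2 + D))). split.
  { apply Rinv_0_lt_compat. lra. }
  intros eta He Hmono t Ht.
  pose proof (eta_bound g eta Hg He (Hmono 0%nat)) as HE.
  pose proof (bound_z1 g eta 40 Hg He HE t) as Hb. fold D in Hb.
  assert (Ht1 : 1 <= INR t) by (apply (le_INR 1); exact Ht).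
  unfold Loss, y1, y2. rewrite !Rmult_1_l.
  pose proof (ell_lb (dot (x1 g) (gd g eta t))) as H1.
  pose proof (ell_nonneg (dot (x2 g) (gd g eta t))) as H2.
  set (z := dot (x1 g) (gd g eta t)) in *.
  pose proof (exp_pos z).
  assert (/ (2 + D * INR t) <= / (1 + exp z)).
  { apply Rinv_le_contravar; lra. }
  assert (/ (2 * (2 + D)) / INR t <= / 2 * / (2 + D * INR t)).
  { unfold Rdiv. rewrite <- !Rinv_mult.
    apply Rinv_le_contravar; [nra|]. nra. }
  apply Rle_ge. nra.
Qed.
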